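(* Let $\mathrm{N}_1 = \mathrm{nM}([2,4,5,6,8,8])$. Then $\mathrm{N}_1(k) = \mathrm{N}(k)$ for all $k \in \mathbb{N} \setminus \{2^m - m + 1 : m \in \mathbb{N}, m \ge 3\}$, while for $k = 2^m - m + 1$ with $m \in \mathbb{N}$, $m \ge 3$, we have $\mathrm{N}_1(k) = \mathrm{N}(k) - 1 = 2^m$.
   Context: $\mathrm{N} : \mathbb{N} \to \mathbb{N}$ is defined by $\mathrm{N}(1) = 2$ and $\mathrm{N}(k) = \max_{i \in \{2,\dots,k\}} \min(2i, \mathrm{N}(k-i+1)+i)$ for $k \ge 2$. $[2,4,5,6,8,8]$ denotes the function $f : \mathbb{N} \to \mathbb{N} \cup \{+\infty\}$ with $(f(1),\dots,f(6)) = (2,4,5,6,8,8)$ and $f(k) = +\infty$ for $k \ge 7$. For $g : \mathbb{N} \to \mathbb{N} \cup \{+\infty\}$ and $k \ge 2$, $m \ge 4$, $\mathrm{pdp}_g(k,m)$ is the set of pairs $(e_0,e_1) \in \mathbb{N}^2$ with (i) $e_0,e_1 \ge 2$; (ii) $e_0,e_1 \le k$; (iii) $e_0+e_1 = m$; (iv) $e_0 \le e_1$; (v) $g(k-e_\varepsilon+1)+e_\varepsilon \ge m$ for both $\varepsilon \in \{0,1\}$. For $f$ with $f(1) = 2$, $f' = \mathrm{nM}(f)$ is defined by $f'(1) = 2$ and, for $k > 1$, $f'(k) = \min(m, f(k))$ where $m$ is the largest integer in $\{4,\dots,2k\}$ with $\mathrm{pdp}_{f'}(k,m) \ne \emptyset$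 (this uses only $f'(k')$ for $k' < k$). *)

(* Defs.v *)
From mathcomp Require Import all_boot.
Set Implicit Arguments. Unset Strict Implicit. Unset Printing Implicit Defensive.

(* Values in N ∪ {+oo} are represented by [option nat]; [None] is +oo.
   Natural numbers N = {1,2,...}: arguments 0 are irrelevant (junk). *)

(* N(1) = 2, N(k) = max_{2<=i<=k} min(2i, N(k-i+1)+i) for k >= 2.
   Defined by recursion with fuel; [N k := Nfuel k k] (fuel k suffices since
   recursive calls are at k-i+1 <= k-1). *)
Fixpoint Nfuel (fuel k : nat) : nat :=
  match fuel with
  | 0 => 2
  | fu.+1 =>
      if k <= 1 then 2
      else \max_(2 <= i < k.+1) minn (2 * i) (Nfuel fu (k - i + 1) + i)
  end.

Definition N (k : nat) : nat := Nfuel k k.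

Definition f0 (k : nat) : option nat :=
  if (1 <= k <= 6) then Some (nth 0 [:: 2; 4; 5; 6; 8; 8] k.-1) else None.

Definition ext_add_ge (x : option nat) (e m : nat) : bool :=
  if x is Some a then m <= a + e else true.

Definition in_pdp (g : nat -> option nat) (k m e0 e1 : nat) : bool :=
  [&& 2 <= e0, 2 <= e1, e0 <= k, e1 <= k, e0 + e1 == m, e0 <= e1,
      ext_add_ge (g (k - e0 + 1)) e0 m & ext_add_ge (g (k - e1 + 1)) e1 m].

(* pdp_g(k,m) != emptyset  (any element has e0,e1 <= k) *)
Definition pdp_nonempty (g : nat -> option nat) (k m : nat) : bool :=
  [exists e0 : 'I_k.+1, exists e1 : 'I_k.+1, in_pdp g k m e0 e1].

Definition ext_min (m : nat) (x : option nat) : nat :=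
  if x is Some a then minn m a else m.

Fixpoint nMfuel (f : nat -> option nat) (fuel k : nat) : nat :=
  match fuel with
  | 0 => 2
  | fu.+1 =>
      if k <= 1 then 2
      else ext_min
             (\max_(4 <= m < (2 * k).+1 | pdp_nonempty (fun j => Some (nMfuel f fu j)) k m) m)
             (f k)
  end.

Definition nM (f : nat -> option nat) (k : nat) : nat := nMfuel f k k.

(* Main.v *)
Require Import Defs.
From mathcomp Require Import all_boot zify.

Fixpoint mof (k : nat) : nat :=
  match k with
  | 0 => 1
  | k'.+1 => let m := mof k' in if k'.+1 + m.+1 == 2 ^ m.+1 then m.+1 else m
  end.

Lemma expn_ge_S n : n < 2 ^ n.
Proof. elim: n => // n IH; rewrite expnS; lia. Qed.

Lemma pow_mono a b : a <= b -> 2 ^ a + b <= 2 ^ b + a.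
Proof.
elim: b => [|b IH]; first by rewrite leqn0 => /eqP ->.
rewrite leq_eqVlt => /orP[/eqP -> //|]; rewrite ltnS => /IH.
have := expn_gt0 2 b; rewrite expnS; lia.
Qed.

Lemma mof_bracket k : 1 <= k ->
  [/\ 1 <= mof k, 2 ^ mof k <= k + mof k & k + mof k + 2 <= 2 ^ (mof k).+1].
Proof.
elim: k => // k IH _; case: k IH => [_|k IH]; first by [].
have [h1 h2 h3] := IH isT.
rewrite (_ : mof k.+2 = if k.+2 + (mof k.+1).+1 == 2 ^ (mof k.+1).+1 then (mof k.+1).+1 else mof k.+1) //.
move: (mof k.+1) h1 h2 h3 => m h1 h2 h3.
case: eqP => [E|NE].
  have := expn_gt0 2 m.+1; rewrite (expnS 2 m.+1); split; lia.
split => //; first lia.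
have := expn_gt0 2 m; rewrite expnS in h3 NE *; lia.
Qed.

Lemma mof_lt j m : 1 <= j -> j + m < 2 ^ m -> mof j < m.
Proof.
move=> j1 h; have [a b c] := @mof_bracket j j1.
rewrite ltnNge; apply/negP => H; have := pow_mono _ _ H; lia.
Qed.

Lemma mof_ge j m : 1 <= j -> 2 ^ m <= j + m -> m <= mof j.
Proof.
move=> j1 h; have [a b c] := @mof_bracket j j1.
rewrite leqNgt; apply/negP => H; have := pow_mono _ _ H; lia.
Qed.

Lemma mof_eq j m : 1 <= j -> 2 ^ m <= j + m -> j + m + 2 <= 2 ^ m.+1 -> mof j = m.
Proof.
move=> j1 h1 h2; apply/eqP; rewrite eqn_leq mof_ge // andbT.
rewrite -ltnS; apply: mof_lt => //; lia.
Qed.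

Definition Nval k := k + mof k.

Lemma mof_ge2 k : 2 <= k -> 2 <= mof k.
Proof. move=> h; apply: mof_ge => //; [lia | rewrite (_ : 2^2 = 4) //; lia]. Qed.

Lemma Nstep k : 2 <= k ->
  \max_(2 <= i < k.+1) minn (2 * i) (Nval (k - i + 1) + i) = Nval k.
Proof.
move=> k2; have [h1 h2 h3] := @mof_bracket k (ltnW k2).
have := mof_ge2 _ k2; rewrite /Nval.
move: h1 h2 h3; case E: (mof k) => [|n] // h1 h2 h3 hn.
have Qn := expn_ge_S n.
rewrite !expnS in h2 h3.
apply/eqP; rewrite eqn_leq; apply/andP; split.
- apply/bigmax_leqP_seq => i; rewrite mem_index_iota => /andP[i2 ik] _.
  case: (leqP (2*i) (k+n.+1)) => h; first by rewrite geq_min h.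
  have hj : mof (k - i + 1) < n.+1.
    apply: mof_lt; first lia. rewrite expnS; lia.
  rewrite geq_min; apply/orP; right; lia.
- apply: (bigmaxn_sup_seq ((k + n.+1 + 1) %/ 2)) => //.
    rewrite mem_index_iota; lia.
  have hj : n <= mof (k - (k + n.+1 + 1) %/ 2 + 1).
    apply: mof_ge; lia.
  rewrite leq_min; apply/andP; split; lia.
Qed.

Lemma Nfuel_val fu k : 1 <= k <= fu -> Nfuel fu k = Nval k.
Proof.
elim: fu k => [|fu IH] k; first lia.
move=> /andP[k1 kf] /=.
case: leqP => hk.
  by have -> : k = 1 by lia.
rewrite -(Nstep _ hk); apply: eq_big_nat => i /andP[i2 ik].
rewrite IH //; lia.
Qed.

Lemma N_val k : 1 <= k -> N k = Nval k.
Proof. by move=> k1; rewrite /N Nfuel_val // k1 leqnn. Qed.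

Definition flag j := (3 <= mof j) && (j + mof j == 2 ^ mof j + 1).
Definition Mval j := j + mof j - flag j.

Definition gM := fun j => Some (Mval j).

Definition pdpH g k v :=
  has (fun e0 => has (fun e1 => in_pdp g k v e0 e1) (iota 0 k.+1)) (iota 0 k.+1).

Lemma pdp_has g k v : pdp_nonempty g k v = pdpH g k v.
Proof.
apply/existsP/hasP.
  move=> [e0 /existsP [e1 H]]; exists (val e0); first by rewrite mem_iota /=.
  by apply/hasP; exists (val e1); first by rewrite mem_iota /=.
move=> [e0 h0 /hasP [e1 h1 H]].
rewrite mem_iota /= in h0; rewrite mem_iota /= in h1.
exists (Ordinal h0); apply/existsP; exists (Ordinal h1); exact H.
Qed.

Lemma small k : 2 <= k <= 6 ->
  ext_min (\max_(4 <= v < (2 * k).+1 | pdp_nonempty gM k v) v) (f0 k) = Mval k.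
Proof.
rewrite (eq_bigl _ _ (pdp_has gM k)).
case/andP; case: k => [|[|[|[|[|[|[|k]]]]]]] //= _ _; rewrite unlock; vm_compute; reflexivity.
Qed.

Lemma pdp_ext g g' k v : (forall j, 1 <= j < k -> g j = g' j) ->
  pdp_nonempty g k v = pdp_nonempty g' k v.
Proof.
move=> gE; rewrite /pdp_nonempty; apply: eq_existsb => e0; apply: eq_existsb => e1.
rewrite /in_pdp.
case h0: (2 <= (e0:nat)); case h1: (2 <= (e1:nat)); case h2: ((e0:nat) <= k);
  case h3: ((e1:nat) <= k) => //=.
rewrite !gE //; lia.
Qed.

Lemma Mval_le j : Mval j <= j + mof j.
Proof. rewrite /Mval; lia. Qed.
Lemma Mval_ge j : j + mof j <= Mval j + 1.
Proof. rewrite /Mval; case: (flag j) => /=; lia. Qed.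
Lemma Mval_nf j : flag j = false -> Mval j = j + mof j.
Proof. by rewrite /Mval => -> /=; rewrite subn0. Qed.
Lemma Mval_f j : flag j = true -> Mval j = j + mof j - 1.
Proof. by rewrite /Mval => ->. Qed.

Lemma Mstep k : 7 <= k ->
  \max_(4 <= v < (2 * k).+1 | pdp_nonempty gM k v) v = Mval k.
Proof.
move=> k7; have k1 : 1 <= k by lia.
have [h1 h2 h3] := @mof_bracket k k1.
have m3 : 3 <= mof k by apply: mof_ge => //; rewrite (_ : 2^3 = 8) //; lia.
rewrite (eq_bigl _ _ (pdp_has gM k)).
case Fk : (flag k); [rewrite (Mval_f _ Fk) | rewrite (Mval_nf _ Fk)];
  move: Fk h1 h2 h3 m3; rewrite /flag; case E: (mof k) => [|n] // Fk h1 h2 h3 m3;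
  have Qn := expn_ge_S n; rewrite !expnS in h2 h3 Fk.
-
  move/andP: Fk => [_ /eqP Fk].
  have n3 : 3 <= n.
    case: (leqP 3 n) => // hn; have n2 : n = 2 by lia.
    by move: Fk; rewrite n2 (_ : 2^2 = 4) //; lia.
  apply/eqP; rewrite eqn_leq; apply/andP; split.
  + apply/bigmax_leqP_seq => v; rewrite mem_index_iota => /andP[v4 v2k].
    move=> /hasP [e0 _ /hasP [e1 _ H]]; move: H; rewrite /in_pdp /=.
    case/and4P => a b c /and5P [d /eqP ev f g h].
    have vle : v <= k + n.+1.
      case: (leqP (2*e1) (k+n.+1)) => he; first lia.
      have := @mof_lt (k-e1+1) n.+1; rewrite expnS => H.
      have := H ltac:(lia) ltac:(lia); have := Mval_le (k-e1+1); lia.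
    case: (leqP v (k + n.+1 - 1)) => // hv.
    have hj1 : mof (k - e1 + 1) < n.+1.
      apply: mof_lt; first lia. rewrite expnS; lia.
    have := Mval_le (k - e1 + 1) => hM.
    have Ej1 : mof (k - e1 + 1) = n by lia.
    have [_ b1 _] := @mof_bracket (k - e1 + 1) ltac:(lia).
    rewrite Ej1 in b1.
    have e0Q : e0 = 2 ^ n by lia.
    have Ej0 : mof (k - e0 + 1) = n.
      apply: mof_eq; first lia; first lia. rewrite expnS; lia.
    have Fj0 : flag (k - e0 + 1) by rewrite /flag Ej0; apply/andP; split => //; apply/eqP; lia.
    have := Mval_f _ Fj0; rewrite Ej0; lia.
  + apply: (bigmaxn_sup_seq (k + n.+1 - 1)) => //.
      rewrite mem_index_iota; lia.
    apply/hasP; exists (2^n); first by rewrite mem_iota; lia.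
    apply/hasP; exists (2^n); first by rewrite mem_iota; lia.
    have Ej : mof (k - 2^n + 1) = n.
      apply: mof_eq; first lia; first lia. rewrite expnS; lia.
    have Fj : flag (k - 2^n + 1) by rewrite /flag Ej; apply/andP; split => //; apply/eqP; lia.
    have := Mval_f _ Fj; rewrite Ej => HM.
    rewrite /in_pdp /= HM.
    apply/and4P; split; try lia.
-
  apply/eqP; rewrite eqn_leq; apply/andP; split.
  + apply/bigmax_leqP_seq => v; rewrite mem_index_iota => /andP[v4 v2k].
    move=> /hasP [e0 _ /hasP [e1 _ H]]; move: H; rewrite /in_pdp /=.
    case/and4P => a b c /and5P [d /eqP ev f g h].
    case: (leqP (2*e1) (k+n.+1)) => he; first lia.
    have := @mof_lt (k-e1+1) n.+1; rewrite expnS => H.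
    have := H ltac:(lia) ltac:(lia); have := Mval_le (k-e1+1); lia.
  + apply: (bigmaxn_sup_seq (k + n.+1)) => //.
      rewrite mem_index_iota; lia.
    apply/hasP; exists (2^n); first by rewrite mem_iota; lia.
    apply/hasP; exists (k + n.+1 - 2^n); first by rewrite mem_iota; lia.
    have Ej1 : mof (k - (k + n.+1 - 2^n) + 1) = n.
      apply: mof_eq; first lia; first lia. rewrite expnS; lia.
    have Fj1 : flag (k - (k + n.+1 - 2^n) + 1) = false.
      rewrite /flag Ej1; apply/negbTE/negP => /andP [_ /eqP]; lia.
    have M1 := Mval_nf _ Fj1; rewrite Ej1 in M1.
    have M0 : k + n.+1 <= Mval (k - 2^n + 1) + 2^n.
      case: (leqP (2 * 2^n) (k - 2^n + 1 + n.+1)) => hj.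
        have Ej0 : mof (k - 2^n + 1) = n.+1.
          apply: mof_eq; first lia; rewrite !expnS; lia.
        have := Mval_ge (k - 2^n + 1); rewrite Ej0; lia.
      have Ej0 : mof (k - 2^n + 1) = n.
        apply: mof_eq; first lia; first lia. rewrite expnS; lia.
      have Fj0 : flag (k - 2^n + 1) = false.
        rewrite /flag Ej0; apply/negbTE/negP => /andP [n3 /eqP ee].
        have fk : (2 < n.+1) && (k + n.+1 == 2 * 2 ^ n + 1).
          apply/andP; split; first lia. apply/eqP; lia.
        by rewrite fk in Fk.
      have := Mval_nf _ Fj0; rewrite Ej0; lia.
    rewrite /in_pdp /= M1; move: M0 Qn h2 h3 k7 m3; clear.
    move: (Mval (k - 2^n + 1)) (2^n) => x Q *.
    apply/and4P; split; try lia.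
Qed.

Lemma nMfuel_val fu k : 1 <= k <= fu -> nMfuel f0 fu k = Mval k.
Proof.
elim: fu k => [|fu IH] k; first lia.
move=> /andP[k1 kf] /=.
case: leqP => hk.
  by have -> : k = 1 by lia.
rewrite (eq_bigl (fun v => pdp_nonempty gM k v)); last first.
  move=> v; apply: pdp_ext => j /andP [j1 jk]; rewrite /gM IH //; lia.
case: (leqP k 6) => k6; first by apply: small; lia.
rewrite Mstep; last lia.
by rewrite /f0 (_ : (1 <= k <= 6) = false) //; lia.
Qed.

Lemma nM_val k : 1 <= k -> nM f0 k = Mval k.
Proof. by move=> k1; rewrite /nM nMfuel_val // k1 leqnn. Qed.

Theorem theorem14p7 :
  (forall k : nat, 1 <= k ->
     ~ (exists m : nat, 3 <= m /\ k = 2 ^ m - m + 1) ->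
     nM f0 k = N k) /\
  (forall m : nat, 3 <= m ->
     nM f0 (2 ^ m - m + 1) = N (2 ^ m - m + 1) - 1 /\
     nM f0 (2 ^ m - m + 1) = 2 ^ m).
Proof.
split.
  move=> k k1 nex; rewrite nM_val // N_val // /Nval Mval_nf //.
  rewrite /flag; apply/negbTE/negP => /andP [m3 /eqP ee]; apply: nex.
  exists (mof k); split => //; lia.
move=> m m3.
have Pm := expn_ge_S m.
have k1 : 1 <= 2 ^ m - m + 1 by lia.
have Em : mof (2 ^ m - m + 1) = m.
  apply: mof_eq => //; first lia.
  have : 2 <= 2 ^ m by apply: (leq_trans _ (ltnW Pm)); lia.
  rewrite expnS; lia.
have Fk : flag (2 ^ m - m + 1) by rewrite /flag Em m3 /=; apply/eqP; lia.
rewrite nM_val // N_val // /Nval (Mval_f _ Fk) Em; split; lia.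
Qed.
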